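(* There exists $\delta>0$ such that for all sufficiently large $|S|$ the following holds: for integers $(w_i)_{i\in S}$ indexed by a finite set $S$, if $|w(2^S)|\ge 2^{(1-\delta)|S|}$, then $\|b_S\|_2\le 2^{0.661|S|}$.
   Context: For $X\subseteq S$, $w(X)=\sum_{i\in X}w_i$, and $w(2^S)=\{w(X):X\subseteq S\}$. The function $b_S:\mathbb{Z}\to\mathbb{Z}$ is defined by $b_S(x)=|\{X\subseteq S: w(X)=x\}|$, and $\|b_S\|_2=\big(\sum_{x\in\mathbb{Z}}b_S(x)^2\big)^{1/2}$. *)

(* Defs.v *)
From Stdlib Require Import Reals.
From mathcomp Require Import all_boot all_algebra.
Set Implicit Arguments. Unset Strict Implicit. Unset Printing Implicit Defensive.
Import GRing.Theory.

(* The finite index set S is 'I_n (so |S| = n); weights w : S -> int. *)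

Definition wsum (n : nat) (w : 'I_n -> int) (X : {set 'I_n}) : int :=
  (\sum_(i in X) w i)%R.

Definition subset_sums (n : nat) (w : 'I_n -> int) : seq int :=
  undup [seq wsum w X | X <- enum {set 'I_n}].

Definition card_sums (n : nat) (w : 'I_n -> int) : nat := size (subset_sums w).

Definition bS (n : nat) (w : 'I_n -> int) (x : int) : nat :=
  #|[set X : {set 'I_n} | wsum w X == x]|.

(* ||b_S||_2 = sqrt (sum_{x in Z} b_S(x)^2); b_S vanishes outside w(2^S). *)
Definition norm2_bS (n : nat) (w : 'I_n -> int) : R :=
  sqrt (INR (\sum_(x <- subset_sums w) (bS w x) ^ 2)%N).

(* Main.v *)
Require Import Defs.
From Stdlib Require Import Reals Lra ZArith.
From mathcomp Require Import all_boot all_algebra.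
From mathcomp Require Import zify.
Import GRing.Theory.
Set Implicit Arguments. Unset Strict Implicit. Unset Printing Implicit Defensive.

Lemma sum_set_prod (n : nat) (h : 'I_n -> bool -> nat) :
  \sum_(X : {set 'I_n}) \prod_(i < n) h i (i \in X) = \prod_(i < n) (h i true + h i false).
Proof.
have -> : \prod_(i < n) (h i true + h i false) = \prod_(i < n) \sum_(b : bool) h i b.
  by apply: eq_bigr => i _; rewrite big_bool.
rewrite (bigA_distr_bigA (fun i b => h i b)).
rewrite (reindex (fun f : {ffun 'I_n -> bool} => [set i | f i])) /=.
  by apply: eq_bigr => f _; apply: eq_bigr => i _; rewrite inE.
exists (fun X : {set 'I_n} => [ffun i => i \in X]) => [f _ | X _].
  by apply/ffunP => i; rewrite ffunE inE.
by apply/setP => i; rewrite inE ffunE.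
Qed.

Lemma amgm (a b k : nat) : a * b = k * k -> 2 * k <= a + b.
Proof.
move=> H; case: (leqP (2 * k) (a + b)) => // H'.
have H2 : (a + b) * (a + b) < (2 * k) * (2 * k) by apply: ltn_mul.
have H3 : 4 * (a * b) <= (a + b) * (a + b).
  have [le|le] := leqP a b.
    have -> : b = a + (b - a) by lia.
    nia.
  have -> : a = b + (a - b) by lia.
  nia.
lia.
Qed.

Definition f (z x y : bool) : nat :=
  match z, x, y with
  | false, false, false => 4 | false, true, true => 4
  | false, true, false => 8 | false, false, true => 2
  | true, false, false => 4 | true, true, true => 4
  | true, true, false => 2 | true, false, true => 8 end.

Definition PP (n : nat) (Z X Y : {set 'I_n}) : nat :=
  \prod_(i < n) f (i \in Z) (i \in X) (i \in Y).

Lemma PPswap n (Z X Y : {set 'I_n}) : PP Z X Y * PP Z Y X = 4 ^ n * 4 ^ n.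
Proof.
rewrite /PP -big_split /= -expnMn.
rewrite (eq_bigr (fun _ => 16)); first by rewrite prod_nat_const card_ord.
by move=> i _; case: (i \in Z); case: (i \in X); case: (i \in Y).
Qed.

Definition Pairs n (w : 'I_n -> int) : {set {set 'I_n} * {set 'I_n}} :=
  [set p | wsum w p.1 == wsum w p.2].

Lemma amgm_sum n (w : 'I_n -> int) (Z : {set 'I_n}) :
  4 ^ n * #|Pairs w| <= \sum_(p in Pairs w) PP Z p.1 p.2.
Proof.
have Hs : \sum_(p in Pairs w) PP Z p.1 p.2 = \sum_(p in Pairs w) PP Z p.2 p.1.
  rewrite (reindex_inj (h := fun p : {set 'I_n} * {set 'I_n} => (p.2, p.1))) /=.
    apply: eq_bigl => p; rewrite !inE; by rewrite eq_sym.
  by move=> [a b] [c d] /= [-> ->].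
suff : 2 * (4 ^ n * #|Pairs w|) <= 2 * \sum_(p in Pairs w) PP Z p.1 p.2 by rewrite leq_pmul2l.
have -> : 2 * \sum_(p in Pairs w) PP Z p.1 p.2 =
    \sum_(p in Pairs w) (PP Z p.1 p.2 + PP Z p.2 p.1).
  by rewrite big_split /= -Hs addnn mul2n.
have -> : 2 * (4 ^ n * #|Pairs w|) = \sum_(p in Pairs w) (2 * 4 ^ n).
  by rewrite sum_nat_const mulnA mulnC.
apply: leq_sum => p _; apply: amgm; exact: PPswap.
Qed.

Definition phi n (Z X Y : {set 'I_n}) : {ffun 'I_n -> 'I_4} :=
  [ffun i => inord ((i \in Z) + (i \in X) + 1 - (i \in Y))].

Lemma phi_sum n (w : 'I_n -> int) (Z X Y : {set 'I_n}) :
  (\sum_(i < n) (((phi Z X Y i : nat)%:Z - 1) * w i) = wsum w Z + wsum w X - wsum w Y)%R.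
Proof.
rewrite /wsum !(big_mkcond (fun i => i \in _)) -big_split -sumrB /=.
apply: eq_bigr => i _; rewrite ffunE.
case: (i \in Z); case: (i \in X); case: (i \in Y); rewrite inordK //=;
  nia.
Qed.

Definition FF (z : bool) (v : nat) (x y : bool) : nat := ((z + x + 1 - y == v) : nat) * f z x y.
Definition g (v : nat) : nat := match v with 0 => 2 | 1 => 8 | 2 => 8 | _ => 2 end.

Lemma FF_bound z v :
  (FF z v true true + FF z v true false) + (FF z v false true + FF z v false false) <= g v.
Proof. by case: z; case: v => [|[|[|[|v]]]]. Qed.

Lemma prod_bool n (b : 'I_n -> bool) : \prod_(i < n) (b i : nat) = [forall i, b i].
Proof.
case: (boolP [forall i, b i]) => [/forallP H | /forallPn [i Hi]].
  by rewrite big1 // => i _; rewrite H.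
by rewrite (bigD1 i) //= (negbTE Hi).
Qed.

Lemma key_fixed n (Z : {set 'I_n}) (V : {ffun 'I_n -> 'I_4}) :
  \sum_(X : {set 'I_n}) \sum_(Y : {set 'I_n}) ((phi Z X Y == V) : nat) * PP Z X Y
    <= \prod_(i < n) g (V i).
Proof.
have E : forall X Y, ((phi Z X Y == V) : nat) * PP Z X Y
                     = \prod_(i < n) FF (i \in Z) (V i) (i \in X) (i \in Y).
  move=> X Y; rewrite /PP.
  have -> : (phi Z X Y == V) = [forall i, phi Z X Y i == V i].
    apply/eqP/forallP => [-> //| H]; apply/ffunP => i; exact/eqP.
  rewrite -prod_bool -big_split /=.
  apply: eq_bigr => i _; rewrite /FF ffunE; congr (_ * _).
  by case: (i \in Z); case: (i \in X); case: (i \in Y); rewrite -val_eqE /= inordK.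
have -> : \sum_(X : {set 'I_n}) \sum_(Y : {set 'I_n}) ((phi Z X Y == V) : nat) * PP Z X Y
   = \sum_(X : {set 'I_n}) \prod_(i < n) (FF (i \in Z) (V i) (i \in X) true
                                      + FF (i \in Z) (V i) (i \in X) false).
  apply: eq_bigr => X _; rewrite -(sum_set_prod (fun i b => FF (i \in Z) (V i) (i \in X) b)).
  by apply: eq_bigr => Y _; exact: E.
rewrite (sum_set_prod (fun i b => FF (i \in Z) (V i) b true + FF (i \in Z) (V i) b false)).
by apply: leq_prod => i _; exact: FF_bound.
Qed.

Lemma sum20 n : \sum_(V : {ffun 'I_n -> 'I_4}) \prod_(i < n) g (V i) = 20 ^ n.
Proof.
rewrite -(bigA_distr_bigA (fun (i : 'I_n) (j : 'I_4) => g j)) /=.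
rewrite (eq_bigr (fun _ => 20)); first by rewrite prod_nat_const card_ord.
by move=> i _; rewrite !big_ord_recr big_ord0.
Qed.

Lemma upper n (w : 'I_n -> int) (R : {set {set 'I_n}})
  (HR : {in R &, forall Z Z', wsum w Z = wsum w Z' -> Z = Z'}) :
  \sum_(Z in R) \sum_(p in Pairs w) PP Z p.1 p.2 <= 20 ^ n.
Proof.
have E1 : forall Z (p : {set 'I_n} * {set 'I_n}), PP Z p.1 p.2 =
   \sum_(V : {ffun 'I_n -> 'I_4}) ((phi Z p.1 p.2 == V) : nat) * PP Z p.1 p.2.
  move=> Z p; rewrite (bigD1 (phi Z p.1 p.2)) //= eqxx mul1n big1 ?addn0 // => V HV.
  by rewrite eq_sym (negbTE HV).
under eq_bigr do under eq_bigr do rewrite E1.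
under eq_bigr do rewrite exchange_big.
rewrite exchange_big -sum20; apply: leq_sum => V _.
set a := fun Z => \sum_(p in Pairs w) ((phi Z p.1 p.2 == V) : nat) * PP Z p.1 p.2.
rewrite -/(\sum_(Z in R) a Z).
have Ha : forall Z, a Z <= \prod_(i < n) g (V i).
  move=> Z; apply: leq_trans (key_fixed Z V).
  rewrite (pair_big xpredT xpredT (fun X Y => ((phi Z X Y == V) : nat) * PP Z X Y)) /=.
  rewrite /a big_mkcond /=; apply: leq_sum => p _; by case: (p \in Pairs w).
have Hex : forall Z, 0 < a Z -> exists2 p, p \in Pairs w & phi Z p.1 p.2 = V.
  move=> Z; case: (boolP [exists p in Pairs w, phi Z p.1 p.2 == V]).
    by move=> /exists_inP [p Hp /eqP E] _; exists p.
  move=> /exists_inPn H; rewrite /a big1 // => p Hp.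
  by rewrite (negbTE (H p Hp)).
have Hs : forall Z, 0 < a Z ->
    wsum w Z = (\sum_(i < n) (((V i : nat)%:Z - 1) * w i))%R.
  move=> Z /Hex [p Hp <-]; rewrite phi_sum.
  move: Hp; rewrite inE => /eqP ->; by rewrite GRing.addrK.
case: (boolP [exists Z in R, 0 < a Z]) => [/exists_inP [Z0 HZ0 Hpos] | /exists_inPn H0].
  rewrite (bigD1 Z0) //= big1 ?addn0 // => Z /andP [HZ HneZ].
  apply/eqP; rewrite -leqn0 leqNgt; apply/negP => Hp; move: HneZ.
  by rewrite (HR Z Z0 HZ HZ0) ?eqxx // (Hs Z Hp) (Hs Z0 Hpos).
rewrite big1 // => Z HZ; apply/eqP; rewrite -leqn0 leqNgt; exact: H0.
Qed.

Definition rep n (w : 'I_n -> int) (x : int) : {set 'I_n} :=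
  odflt set0 [pick X : {set 'I_n} | wsum w X == x].

Lemma rep_spec n (w : 'I_n -> int) X : wsum w (rep w (wsum w X)) = wsum w X.
Proof.
rewrite /rep; case: pickP => [Y /eqP //| H].
by move: (H X); rewrite eqxx.
Qed.

Definition RR n (w : 'I_n -> int) : {set {set 'I_n}} := [set Z | Z == rep w (wsum w Z)].

Lemma RR_inj n (w : 'I_n -> int) :
  {in RR w &, forall Z Z', wsum w Z = wsum w Z' -> Z = Z'}.
Proof.
move=> Z Z'; rewrite !inE => /eqP HZ /eqP HZ' E.
by rewrite HZ HZ' E.
Qed.

Lemma card_RR n (w : 'I_n -> int) : #|RR w| = card_sums w.
Proof.
rewrite /card_sums cardE -(size_map (wsum w)).
apply: perm_size; apply: uniq_perm.
- rewrite map_inj_in_uniq ?enum_uniq // => Z Z' HZ HZ'.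
  apply: RR_inj; by rewrite -mem_enum.
- exact: undup_uniq.
move=> y; rewrite /subset_sums mem_undup; apply/mapP/mapP.
  move=> [Z HZ ->]; exists Z => //; by rewrite mem_enum.
move=> [X _ ->]; exists (rep w (wsum w X)); last by rewrite rep_spec.
by rewrite mem_enum inE rep_spec.
Qed.

Lemma bS_sum n (w : 'I_n -> int) x :
  bS w x = \sum_(Y : {set 'I_n}) (wsum w Y == x : nat).
Proof.
rewrite /bS -[LHS]muln1 -sum_nat_cond_const big_mkcond /=.
by apply: eq_bigr => Y _; case: (wsum w Y == x).
Qed.

Lemma card_Pairs n (w : 'I_n -> int) :
  \sum_(x <- subset_sums w) bS w x ^ 2 = #|Pairs w|.
Proof.
have -> : #|Pairs w| = \sum_(X : {set 'I_n}) bS w (wsum w X).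
  rewrite -sum1_card big_mkcond /=.
  have -> : \sum_(p : {set 'I_n} * {set 'I_n}) (if p \in Pairs w then 1 else 0) =
     \sum_(X : {set 'I_n}) \sum_(Y : {set 'I_n}) (if (X, Y) \in Pairs w then 1 else 0).
    by rewrite pair_big; apply: eq_big => // -[].
  apply: eq_bigr => X _; rewrite bS_sum; apply: eq_bigr => Y _.
  by rewrite inE /= eq_sym; case: (_ == _).
have -> : \sum_(x <- subset_sums w) bS w x ^ 2 =
   \sum_(x <- subset_sums w) \sum_(X : {set 'I_n}) (wsum w X == x : nat) * bS w x.
  apply: eq_bigr => x _; rewrite -big_distrl /= -bS_sum.
  by rewrite expnS expn1.
rewrite exchange_big /=; apply: eq_bigr => X _.
have Hin : wsum w X \in subset_sums w.
  by rewrite /subset_sums mem_undup; apply: map_f; rewrite mem_enum.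
rewrite (bigD1_seq (wsum w X)) //= ?undup_uniq // eqxx mul1n big1 ?addn0 //.
by move=> x Hx; rewrite eq_sym (negbTE Hx).
Qed.

Lemma main_comb n (w : 'I_n -> int) :
  card_sums w * (\sum_(x <- subset_sums w) bS w x ^ 2) <= 5 ^ n.
Proof.
rewrite card_Pairs -card_RR.
have H : #|RR w| * #|Pairs w| * 4 ^ n <= 5 ^ n * 4 ^ n.
  have -> : 5 ^ n * 4 ^ n = 20 ^ n by rewrite -expnMn.
  rewrite -mulnA -sum_nat_const.
  have U := upper (@RR_inj n w).
  apply: (leq_trans _ U).
  apply: leq_sum => Z _; rewrite mulnC; exact: amgm_sum.
by rewrite leq_pmul2r ?expn_gt0 in H.
Qed.


Local Open Scope R_scope.
Lemma INR_expn (m k : nat) : INR (expn m k) = INR m ^ k.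
Proof.
elim: k => [|k IH]; first by rewrite expn0.
by rewrite expnS mult_INR IH.
Qed.

Lemma five_le : 5 <= Rpower 2 (476 / 205).
Proof.
have H205 : INR 205 = 205 by rewrite INR_IZR_INZ.
have H476 : INR 476 = 476 by rewrite INR_IZR_INZ.
have E5 : Rpower (Rpower 5 (INR 205)) (/ 205) = 5.
  rewrite Rpower_mult H205 Rinv_r; last lra.
  apply: Rpower_1; lra.
have E2 : Rpower (Rpower 2 (INR 476)) (/ 205) = Rpower 2 (476 / 205).
  by rewrite Rpower_mult H476.
rewrite -E5 -E2.
apply: Rle_Rpower_l.
  left; apply: Rinv_0_lt_compat; lra.
rewrite !Rpower_pow; lra.
Qed.

Lemma real_step n (B M : R) : 0 <= B ->
  Rpower 2 ((1 - / 20500) * INR n) <= M -> M * B <= INR 5 ^ n ->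
  sqrt B <= Rpower 2 (0.661 * INR n).
Proof.
move=> HB Hm Hc.
set K := Rpower 2 ((1 - / 20500) * INR n) in Hm.
set T := Rpower 2 (0.661 * INR n).
have HK : 0 < K by rewrite /K /Rpower; apply: exp_pos.
have HT : 0 < T by rewrite /T /Rpower; apply: exp_pos.
have H5 : INR 5 ^ n <= T * T * K.
  rewrite /T /K -!Rpower_plus.
  have -> : 0.661 * INR n + 0.661 * INR n + (1 - / 20500) * INR n
      = (476 / 205) * INR n by lra.
  have -> : INR 5 = 5 by rewrite INR_IZR_INZ.
  rewrite -Rpower_mult -Rpower_pow; last lra.
  apply: Rle_Rpower_l; first exact: pos_INR.
  split; first lra.
  exact: five_le.
have HBT : B <= T * T.
  apply: (Rmult_le_reg_r K) => //.
  apply: Rle_trans (_ : B * M <= _).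
    by apply: Rmult_le_compat_l.
  apply: Rle_trans H5; rewrite (Rmult_comm B M); exact: Hc.
rewrite -(sqrt_square T); last lra.
exact: sqrt_le_1_alt.
Qed.

Theorem proposition5 :
  exists delta : R, 0 < delta /\
  exists N : nat, forall n : nat, (N <= n)%nat ->
  forall w : 'I_n -> int,
    Rpower 2 ((1 - delta) * INR n) <= INR (card_sums w) ->
    norm2_bS w <= Rpower 2 (0.661 * INR n).
Proof.
exists (/ 20500); split; first lra.
exists 0%nat => n _ w Hm.
have Hc := le_INR _ _ (leP (main_comb w)).
rewrite mult_INR INR_expn in Hc.
rewrite /norm2_bS.
exact: (real_step (pos_INR _) Hm Hc).
Qed.
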